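(* Let $a,n\in\mathbb{Z}^+$ with $a>1$. Then $$\sqrt[n]{a} = \lim_{k\to\infty}\frac{(k^{kn}+1)^{kn+1}\bmod (k^{kn^2}-a)}{(k^{kn}+1)^{kn}\bmod (k^{kn^2}-a)} - 1\quad\text{(in }\mathbb{R}),$$ where the limit is over positive integers $k$.
   Context: For integers, $u\bmod m$ denotes the least non-negative remainder of $u$ upon division by $m>0$. $\sqrt[n]{a}$ denotes the positive real $n$-th root of $a$. *)

(* Defs.v *)
From HB Require Import structures.
From mathcomp Require Import all_boot all_order all_algebra.
From mathcomp Require Import all_classical all_reals all_analysis.
Set Implicit Arguments. Unset Strict Implicit. Unset Printing Implicit Defensive.
Import Order.TTheory GRing.Theory Num.Theory.
Local Open Scope ring_scope.

Definition modulus6p2 (a n k : nat) : int := (k%:Z) ^+ (k * n ^ 2) - a%:Z.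

(* (k^(k n) + 1)^e  mod  (k^(k n^2) - a), least non-negative remainder (intdiv's modz) *)
Definition term6p2 (a n k e : nat) : int :=
  ((((k%:Z) ^+ (k * n) + 1) ^+ e) %% modulus6p2 a n k)%Z.

Definition seq6p2 (R : realType) (a n : nat) (k : nat) : R :=
  (term6p2 a n k (k * n + 1))%:~R / (term6p2 a n k (k * n))%:~R - 1.

(* Main.v *)
Require Import Defs.
From HB Require Import structures.
From mathcomp Require Import all_boot all_order all_algebra.
From mathcomp Require Import all_classical all_reals all_analysis.
Import Order.TTheory GRing.Theory Num.Theory.
Local Open Scope ring_scope.
Local Open Scope classical_set_scope.
From mathcomp Require Import ring lra zify.

Fixpoint cc (a n' e r : nat) : nat :=
  match e with
  | 0 => (r == 0)%N
  | e'.+1 => (cc a n' e' r + (if r == 0%N then a * cc a n' e' n' else cc a n' e' r.-1))%N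
  end.

Lemma cc_poly (R : comPzRingType) (a n' e : nat) (x : R) :
  \sum_(r < n'.+1) (cc a n' e.+1 r)%:R * x ^+ r =
  (1 + x) * (\sum_(r < n'.+1) (cc a n' e r)%:R * x ^+ r)
  - (cc a n' e n')%:R * (x ^+ n'.+1 - a%:R).
Proof.
have E1 : \sum_(r < n'.+1) (cc a n' e.+1 r)%:R * x ^+ r =
   (cc a n' e 0)%:R + a%:R * (cc a n' e n')%:R +
   \sum_(i < n') ((cc a n' e i.+1)%:R * x ^+ i.+1 + (cc a n' e i)%:R * x ^+ i.+1).
  rewrite big_ord_recl /= expr0 mulr1 natrD natrM; congr (_ + _).
  by apply: eq_bigr => i _; rewrite /bump /= natrD mulrDl.
have E2 : \sum_(r < n'.+1) (cc a n' e r)%:R * x ^+ r =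
   (cc a n' e 0)%:R + \sum_(i < n') (cc a n' e i.+1)%:R * x ^+ i.+1.
  by rewrite big_ord_recl /= expr0 mulr1.
have E3 : x * \sum_(r < n'.+1) (cc a n' e r)%:R * x ^+ r =
   \sum_(i < n') (cc a n' e i)%:R * x ^+ i.+1 + (cc a n' e n')%:R * x ^+ n'.+1.
  rewrite big_distrr big_ord_recr /=; congr (_ + _).
    by apply: eq_bigr => i _; rewrite exprS; ring.
  by rewrite exprS; ring.
rewrite mulrDl mul1r E3 E1 E2 big_split /=.
ring.
Qed.

Lemma cc0 (R : comPzRingType) (a n' : nat) (x : R) :
  \sum_(r < n'.+1) (cc a n' 0 r)%:R * x ^+ r = 1.
Proof.
rewrite big_ord_recl /= expr0 mulr1 big1 ?addr0 // => i _.
by rewrite /bump /= mul0r.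
Qed.

Lemma cc_root (R : comPzRingType) (a n' e : nat) (x : R) :
  x ^+ n'.+1 = a%:R ->
  \sum_(r < n'.+1) (cc a n' e r)%:R * x ^+ r = (1 + x) ^+ e.
Proof.
move=> hx; elim: e => [|e IH]; first by rewrite cc0 expr0.
by rewrite cc_poly IH hx subrr mulr0 subr0 exprS.
Qed.

Lemma cc_cong (a n' e : nat) (x : int) : exists q : int,
  (x + 1) ^+ e = \sum_(r < n'.+1) (cc a n' e r)%:R * x ^+ r + q * (x ^+ n'.+1 - a%:R).
Proof.
elim: e => [|e [q IH]]; first by exists 0; rewrite cc0 expr0 mul0r addr0.
exists ((cc a n' e n')%:R + (1 + x) * q).
rewrite cc_poly exprS IH; ring.
Qed.

Lemma cc_le (a n' e r : nat) : (1 <= a)%N -> (cc a n' e r <= (a + 1) ^ e)%N.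
Proof.
move=> ha; elim: e r => [|e IH] r /=; first by case: (r == 0%N).
have h1 := IH r. have h2 := IH n'. have h3 := IH r.-1.
rewrite expnS.
have h4 : (cc a n' e r.-1 <= a * (a + 1) ^ e)%N.
  by apply: (leq_trans h3); rewrite leq_pmull.
have h5 : (a * cc a n' e n' <= a * (a + 1) ^ e)%N by rewrite leq_mul2l h2 orbT.
case: (r == 0%N); nia.
Qed.

Section Contract.
Variables (R : realType) (al : R) (n' : nat) (F : nat -> nat -> R).
Hypothesis al0 : 0 < al.
Hypothesis Frec : forall e r, (1 + al) * F e.+1 r = F e r + al * F e (r + n').
Hypothesis Fper : forall e r, F e (r + n'.+1) = F e r.

Let be := al / (1 + al) ^+ 2.

Lemma be_facts : [/\ 0 < be, be * (1 + al) <= 1 & be * (1 + al) <= al].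
Proof.
have hal := al0. have h1 : 0 < 1 + al by lra.
have -> : be * (1 + al) = al / (1 + al) by rewrite /be; field; lra.
split.
- by rewrite /be divr_gt0 // exprn_gt0.
- by rewrite ler_pdivrMr //; lra.
- by rewrite ler_pdivrMr //; nra.
Qed.

Lemma pres e (m M : R) : (forall r, m <= F e r <= M) -> forall r, m <= F e.+1 r <= M.
Proof.
move=> hb r; have hal := al0; have := Frec e r; have /andP[h1 h2] := hb r; have /andP[h3 h4] := hb (r + n')%N.
move=> E.
have p1 : 0 <= al * (F e (r + n')%N - m) by apply: mulr_ge0; lra.
have p2 : 0 <= al * (M - F e (r + n')%N) by apply: mulr_ge0; lra.
have hA : 0 <= (1 + al) * (F e.+1 r - m) by rewrite mulrBr E; lra.
have hB : 0 <= (1 + al) * (M - F e.+1 r) by rewrite mulrBr E; lra.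
rewrite pmulr_rge0 in hA; last by lra.
rewrite pmulr_rge0 in hB; last by lra.
apply/andP; split; lra.
Qed.

Lemma presN e (m M : R) t : (forall r, m <= F e r <= M) -> forall r, m <= F (e + t)%N r <= M.
Proof.
move=> hb; elim: t => [|t IH]; first by rewrite addn0.
by rewrite addnS; apply: pres.
Qed.

Lemma lift1 e (m M g : R) s t : 0 <= g -> (forall r, m <= F e r <= M) ->
  (forall j, (s <= j <= s + t)%N -> m + g <= F e j) ->
  forall j, (s <= j <= s + t.+1)%N -> m + g * be <= F e.+1 j.
Proof.
move=> g0 hb hg j /andP[hj1 hj2]; have hal := al0.
have [bpos bl1 bla] := be_facts.
have E := Frec e j.
have hgb1 : g * (be * (1 + al)) <= g by nra.
have hgb2 : g * (be * (1 + al)) <= al * g by nra.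
suff hA : 0 <= (1 + al) * (F e.+1 j - (m + g * be)).
  by rewrite pmulr_rge0 in hA; lra.
have /andP[h3 h4] := hb (j + n')%N.
have /andP[h5 h6] := hb j.
case: (ltnP (s + t) j) => hj.
- have ej : j = (s + t).+1 by apply/eqP; rewrite eqn_leq hj andbT -addnS.
  have hy : m + g <= F e (j + n').
    by rewrite ej addSnnS Fper; apply: hg; rewrite leq_addr leqnn.
  nra.
- have hx : m + g <= F e j by apply: hg; rewrite hj1 hj.
  nra.
Qed.

Lemma liftN e (m M g : R) s t : 0 <= g -> (forall r, m <= F e r <= M) ->
  m + g <= F e s ->
  forall j, (s <= j <= s + t)%N -> m + g * be ^+ t <= F (e + t)%N j.
Proof.
move=> g0 hb hs; elim: t => [|t IH] j hj.
- rewrite addn0 expr0 mulr1.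
  have -> : j = s by apply/eqP; rewrite eqn_leq; rewrite addn0 in hj; rewrite andbC.
  by [].
- have [bpos _ _] := be_facts.
  rewrite addnS exprSr mulrA.
  apply: (@lift1 (e + t)%N m M _ s t) => //.
  + by apply: mulr_ge0 => //; apply: exprn_ge0; apply: ltW.
  + exact: presN.
Qed.

Lemma perN e r : F e r = F e (r %% n'.+1)%N.
Proof.
rewrite {1}(divn_eq r n'.+1); elim: (r %/ n'.+1)%N => [|q IH]; first by rewrite mul0n add0n.
by rewrite mulSnr addnAC Fper.
Qed.

Lemma contract e (m d : R) : 0 <= d -> (forall r, m <= F e r <= m + d) ->
  exists m', forall r, m' <= F (e + n'.+1)%N r <= m' + (1 - be ^+ n'.+1 / 2) * d.
Proof.
move=> d0 hb; have hal := al0.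
have [bpos bl1 bla] := be_facts.
have be1 : be <= 1.
  have : be <= be * (1 + al) by nra.
  lra.
have bn1 : be ^+ n'.+1 <= 1 by apply: exprn_ile1 => //; apply: ltW.
have bn0 : 0 <= be ^+ n'.+1 by apply: exprn_ge0; apply: ltW.
case: (pselect (exists s, m + d / 2 <= F e s)) => [[s hs]|hns].
- exists (m + d / 2 * be ^+ n'.+1) => r.
  rewrite perN in hs.
  have hlift := @liftN e m (m + d) (d / 2) (s %% n'.+1)%N n'.+1 ltac:(lra) hb hs.
  have hup := @presN e m (m + d) n'.+1 hb.
  have /andP[_ hu] := hup r.
  have hs' : (s %% n'.+1 < n'.+1)%N by apply: ltn_pmod.
  have hr' : (r %% n'.+1 < n'.+1)%N by apply: ltn_pmod.
  have hl : m + d / 2 * be ^+ n'.+1 <= F (e + n'.+1)%N r.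
    rewrite perN.
    case: (leqP (s %% n'.+1) (r %% n'.+1)) => h.
    + apply: hlift.
      rewrite h /=; apply: leq_trans (ltnW hr') _; exact: leq_addl.
    + rewrite -Fper; apply: hlift.
      rewrite leq_add2r (ltnW h) andbT.
      exact: leq_trans (ltnW hs') (leq_addl _ _).
  apply/andP; split => //.
  have -> : m + d / 2 * be ^+ n'.+1 + (1 - be ^+ n'.+1 / 2) * d = m + d by field.
  by [].
- exists m => r.
  have hb' : forall r, m <= F e r <= m + d / 2.
    move=> r'; have /andP[h1 _] := hb r'; apply/andP; split => //.
    apply: ltW; rewrite ltNge; apply/negP => h; apply: hns; exists r'; exact: h.
  have /andP[h1 h2] := @presN e m (m + d / 2) n'.+1 hb' r.
  apply/andP; split => //.
  apply: (le_trans h2).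
  have : 0 <= d * (1 - be ^+ n'.+1) by nra.
  lra.
Qed.

End Contract.

Section Contract2.
Variables (R : realType) (al : R) (n' : nat) (F : nat -> nat -> R).
Hypothesis al0 : 0 < al.
Hypothesis Frec : forall e r, (1 + al) * F e.+1 r = F e r + al * F e (r + n').
Hypothesis Fper : forall e r, F e (r + n'.+1) = F e r.

Definition theta := 1 - (al / (1 + al) ^+ 2) ^+ n'.+1 / 2.

Lemma theta_facts : 0 <= theta < 1.
Proof.
have hal := al0.
have bpos : 0 < al / (1 + al) ^+ 2 by rewrite divr_gt0 // exprn_gt0 //; lra.
have b1 : al / (1 + al) ^+ 2 <= 1.
  rewrite ler_pdivrMr ?exprn_gt0 //; last lra.
  have q : 0 <= al * al by apply: mulr_ge0; lra.
  have -> : 1 * (1 + al) ^+ 2 = 1 + al + al + al * al by ring.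
  lra.
have bn1 : (al / (1 + al) ^+ 2) ^+ n'.+1 <= 1 by apply: exprn_ile1 => //; apply: ltW.
have bn0 : 0 < (al / (1 + al) ^+ 2) ^+ n'.+1 by apply: exprn_gt0.
rewrite /theta; apply/andP; split; lra.
Qed.

Lemma iter_contract (m0 : R) : (forall r, m0 <= F 0 r <= m0 + 1) ->
  forall k, exists m, forall r, m <= F (k * n'.+1)%N r <= m + theta ^+ k.
Proof.
move=> h0; elim => [|k [m IH]]; first by exists m0; rewrite expr0.
have /andP[t0 _] := theta_facts.
have [m' hm'] := @contract R al n' F al0 Frec Fper (k * n'.+1)%N m (theta ^+ k)
   (exprn_ge0 _ t0) IH.
exists m' => r; rewrite mulSnr exprS.
by have := hm' r; rewrite mulrC.
Qed.

Lemma close_mean e (m d : R) (Fsum : \sum_(r < n'.+1) F e r = 1) :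
  (forall r, m <= F e r <= m + d) ->
  1 / n'.+1%:R - d <= F e n' <= 1 / n'.+1%:R + d.
Proof.
move=> hb.
have s1 : \sum_(r < n'.+1) m <= \sum_(r < n'.+1) F e r.
  by apply: ler_sum => i _; have /andP[] := hb i.
have s2 : \sum_(r < n'.+1) F e r <= \sum_(r < n'.+1) (m + d).
  by apply: ler_sum => i _; have /andP[] := hb i.
rewrite Fsum !sumr_const card_ord in s1 s2.
rewrite -(mulr_natr m) in s1; rewrite -(mulr_natr (m + d)) in s2.
have hn : 0 < n'.+1%:R :> R by rewrite ltr0n.
have /andP[h1 h2] := hb n'.
have e1 : m <= 1 / n'.+1%:R by rewrite ler_pdivlMr.
have e2 : 1 / n'.+1%:R <= m + d by rewrite ler_pdivrMr.
have h2' : F e n' <= m + d :> R := h2.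
apply/andP; split.
- apply: le_trans h1; rewrite lerBlDr; exact: e2.
- apply: le_trans h2' _; rewrite lerD2r; exact: e1.
Qed.

End Contract2.

Lemma modS n' r : ((r + n') %% n'.+1 = if (r %% n'.+1 == 0) then n' else (r %% n'.+1).-1)%N.
Proof.
rewrite -modnDml; have := ltn_pmod r (ltn0Sn n').
case: (r %% n'.+1)%N => [|j] hj /=; first by rewrite add0n modn_small.
by rewrite addSnnS modnDr modn_small //; apply: ltnW.
Qed.

Section W.
Variables (R : realType) (a n' : nat) (al : R).
Hypothesis al0 : 0 < al.
Hypothesis hal : al ^+ n'.+1 = a%:R.

Definition w e r := (cc a n' e (r %% n'.+1)%N)%:R * al ^+ (r %% n'.+1)%N / (1 + al) ^+ e.

Lemma w_rec e r : (1 + al) * w e.+1 r = w e r + al * w e (r + n').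
Proof.
have h1 : (1 + al) != 0 by apply/negP => /eqP h; have := al0; lra.
rewrite /w modS; case: (r %% n'.+1)%N => [|j] /=.
- rewrite natrD natrM -hal !exprS.
  field; rewrite ?h1 ?expf_neq0 // .
- rewrite natrD !exprS; field; rewrite ?h1 ?expf_neq0 // .
Qed.

Lemma w_per e r : w e (r + n'.+1) = w e r.
Proof. by rewrite /w modnDr. Qed.

Lemma w_sum e : \sum_(r < n'.+1) w e r = 1.
Proof.
have h1 : (1 + al) ^+ e != 0 by apply: expf_neq0; apply/negP => /eqP h; have := al0; lra.
rewrite /w; under eq_bigr => i _ do rewrite (modn_small (ltn_ord i)).
by rewrite -mulr_suml cc_root // divff.
Qed.

Lemma w0 r : 0 <= w 0 r <= 0 + 1.
Proof.
rewrite /w /= expr0 divr1 add0r.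
case: (r %% n'.+1)%N => [|j] /=; first by rewrite expr0 mulr1 ler01 lexx.
by rewrite mul0r lexx ler01.
Qed.

Lemma w_close k :
  (1 / n'.+1%:R - theta R al n' ^+ k <= w (k * n'.+1)%N n' <= 1 / n'.+1%:R + theta R al n' ^+ k) /\
  (1 / n'.+1%:R - theta R al n' ^+ k <= w (k * n'.+1).+1 n' <= 1 / n'.+1%:R + theta R al n' ^+ k).
Proof.
have [m hm] := @iter_contract R al n' w al0 w_rec w_per 0 w0 k.
split; first exact: close_mean (w_sum _) hm.
apply: close_mean (w_sum _) _.
exact: (@pres R al n' w al0 w_rec).
Qed.
End W.

Lemma Xbound (R : realType) (a n' : nat) (al N : R) e B :
  0 < al -> al ^+ n'.+1 = a%:R -> 1 <= N -> (forall r, (cc a n' e r <= B)%N) ->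
  w R a n' al e n' / al ^+ n' <=
    (\sum_(r < n'.+1) (cc a n' e r)%:R * N ^+ r) / (N ^+ n' * (1 + al) ^+ e) <=
  w R a n' al e n' / al ^+ n' + n'.+1%:R * B%:R / N.
Proof.
move=> al0 hal N1 hB.
have N0 : 0 < N by lra.
have P0 : 0 < N ^+ n' by apply: exprn_gt0.
have Q1 : 1 <= (1 + al) ^+ e by apply: exprn_ege1; lra.
have Q0 : 0 < (1 + al) ^+ e by lra.
have an0 : 0 < al ^+ n' by apply: exprn_gt0.
rewrite big_ord_recr /=.
set Rem := \sum_(i < n') _.
have Rem0 : 0 <= Rem by apply: sumr_ge0 => i _; apply: mulr_ge0 => //; apply: exprn_ge0; lra.
have RemN : Rem * N <= n'%:R * B%:R * N ^+ n'.
  rewrite /Rem mulr_suml.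
  have -> : n'%:R * B%:R * N ^+ n' = \sum_(i < n') (B%:R * N ^+ n') :> R.
    by rewrite sumr_const card_ord -mulrA mulr_natl.
  apply: ler_sum => i _.
  rewrite -mulrA -exprSr; apply: ler_pM => //.
  - by apply: exprn_ge0; lra.
  - by rewrite ler_nat.
  - by apply: ler_weXn2l.
have wE : w R a n' al e n' / al ^+ n' = (cc a n' e n')%:R / (1 + al) ^+ e.
  rewrite /w (modn_small (ltnSn n')); field; apply/andP; split; rewrite gt_eqF //.
have XE : (Rem + (cc a n' e n')%:R * N ^+ n') / (N ^+ n' * (1 + al) ^+ e) =
   (cc a n' e n')%:R / (1 + al) ^+ e + Rem / N ^+ n' / (1 + al) ^+ e.
  field; apply/andP; split; rewrite gt_eqF //.
rewrite wE XE.
have h1 : 0 <= Rem / N ^+ n' / (1 + al) ^+ e by apply: divr_ge0; [apply: divr_ge0 | ]; lra.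
have h2 : Rem / N ^+ n' / (1 + al) ^+ e <= Rem / N ^+ n'.
  rewrite ler_pdivrMr //; apply: ler_peMr => //; apply: divr_ge0; lra.
have h3 : Rem / N ^+ n' <= n'.+1%:R * B%:R / N.
  rewrite ler_pdivrMr // mulrAC ler_pdivlMr //.
  apply: (le_trans RemN).
  rewrite ler_wpM2r //; first lra.
  by rewrite ler_wpM2r ?ler_nat.
apply/andP; split; lra.
Qed.

Lemma natbound a n k : (1 <= a)%N -> (1 <= n)%N -> (2 * a + 2 <= k)%N ->
  (n * (a + 1) ^ (k * n + 1) + a < k ^ (k * n))%N /\
  (n * (a + 1) ^ (k * n + 1) * 2 ^ k <= n * (a + 1) * k ^ (k * n))%N.
Proof.
move=> ha hn hk.
set E := (k * n)%N.
have hE : ((2 * a + 2) * n <= E)%N by rewrite /E leq_mul2r hk orbT.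
have hkE : (k <= E)%N by rewrite /E leq_pmulr.
have h1 : ((2 * (a + 1)) ^ E <= k ^ E)%N.
  have [E0|E0] := posnP E; first by rewrite E0.
  rewrite leq_exp2r //; lia.
rewrite expnMn in h1.
have h2 : (E < 2 ^ E)%N by apply: ltn_expl.
have h3 : (2 ^ k <= 2 ^ E)%N by apply: leq_pexp2l.
have X1 : (1 <= (a + 1) ^ E)%N by rewrite expn_gt0 addn1.
rewrite [(E + 1)%N]addn1 expnSr.
set X := ((a + 1) ^ E)%N in X1 h1 *.
set Y := (2 ^ E)%N in h1 h2 h3 *.
set Z := (k ^ E)%N in h1 *.
set W := (2 ^ k)%N in h3 *.
have h4 : (X * W <= Z)%N by apply: leq_trans h1; rewrite mulnC leq_mul2r h3 orbT.
have h5 : ((E + 1) * X <= Y * X)%N by rewrite leq_mul2r; apply/orP; right; lia.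
split; nia.
Qed.

Lemma term_eq a n' k e : (1 <= a)%N -> (2 * a + 2 <= k)%N -> (e <= k * n'.+1 + 1)%N ->
  term6p2 a n'.+1 k e =
  \sum_(r < n'.+1) (cc a n' e r)%:R * ((k%:Z) ^+ (k * n'.+1)) ^+ r.
Proof.
move=> ha hk he.
have [nb1 _] := @natbound a n'.+1 k ha (ltn0Sn _) hk.
set N := (k%:Z) ^+ (k * n'.+1).
have hM : modulus6p2 a n'.+1 k = N ^+ n'.+1 - a%:R.
  by rewrite /modulus6p2 -exprM natz -mulnn mulnA.
rewrite /term6p2 hM.
have [q Hq] := cc_cong a n' e N.
rewrite Hq addrC modzMDl modz_small //.
set B := ((a + 1) ^ (k * n'.+1 + 1))%N.
have hB : forall r, (cc a n' e r <= B)%N.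
  move=> r; apply: leq_trans (@cc_le a n' e r ha) _.
  by apply: leq_pexp2l; first by rewrite addn1.
have NE : N = (k ^ (k * n'.+1))%N%:Z by rewrite /N -[in RHS]natz natrX natz.
have N1 : 1 <= N.
  rewrite NE lez_nat expn_gt0; apply/orP; left; lia.
have nb1' : ((n'.+1 * B + a) + 1)%:R <= N :> int.
  by rewrite NE natz lez_nat addn1.
have P1 : 1 <= N ^+ n' by apply: exprn_ege1.
apply/andP; split.
- apply: sumr_ge0 => i _; apply: mulr_ge0 => //; apply: exprn_ge0; lra.
- have S1 : \sum_(r < n'.+1) (cc a n' e r)%:R * N ^+ r <= \sum_(r < n'.+1) (B%:R * N ^+ n').
    apply: ler_sum => i _; apply: ler_pM => //.
    + by apply: exprn_ge0; lra.
    + by rewrite ler_nat.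
    + by apply: ler_weXn2l => //; rewrite -ltnS.
  rewrite sumr_const card_ord -[_ *+ n'.+1]mulr_natl in S1.
  apply: (le_lt_trans S1).
  rewrite !natrD natrM in nb1'.
  rewrite exprS.
  set P := N ^+ n' in P1 *.
  set D := N - (n'.+1%:R * B%:R + a%:R).
  have D1 : 1 <= D by rewrite /D; lra.
  have h1 : 0 <= (a%:R : int) * (P - 1) by apply: mulr_ge0 => //; lra.
  have h2 : 0 <= (D - 1) * P by apply: mulr_ge0; lra.
  have -> : N * P - a%:R = n'.+1%:R * (B%:R * P) + ((D - 1) * P + (a%:R * (P - 1)) + P) by rewrite /D; ring.
  lra.
Qed.

Lemma castS (R : realType) a n' k e :
  ((\sum_(r < n'.+1) (cc a n' e r)%:R * ((k%:Z) ^+ (k * n'.+1)) ^+ r : int)%:~R : R) =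
  \sum_(r < n'.+1) (cc a n' e r)%:R * ((k%:R : R) ^+ (k * n'.+1)) ^+ r.
Proof.
rewrite rmorph_sum; apply: eq_bigr => i _.
by rewrite rmorphM rmorph_nat /= !rmorphXn /= -pmulrn.
Qed.

Lemma bnd (R : realType) a n' k : (1 <= a)%N -> (2 * a + 2 <= k)%N ->
  n'.+1%:R * ((a + 1) ^ (k * n'.+1 + 1))%:R / ((k%:R : R) ^+ (k * n'.+1)) <=
  n'.+1%:R * (a + 1)%:R * (2^-1) ^+ k.
Proof.
move=> ha hk.
have [_ h] := @natbound a n'.+1 k ha (ltn0Sn _) hk.
have k0 : (0 < k)%N by apply: leq_trans hk; lia.
have NR0 : 0 < (k%:R : R) ^+ (k * n'.+1) by apply: exprn_gt0; rewrite ltr0n.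
have T0 : 0 < (2 : R) ^+ k by apply: exprn_gt0.
rewrite ler_pdivrMr // exprVn mulrAC ler_pdivlMr //.
have := h; rewrite -(ler_nat R) !natrM !natrX => h'.
exact: h'.
Qed.

Section Aux.
Import numFieldNormedType.Exports.

Lemma main_aux (R : realType) (a n : nat) (ha : (1 < a)%N) (hn : (0 < n)%N) :
  seq6p2 R a n @ \oo --> powR (a%:R : R) (n%:R^-1).
Proof.
case: n hn => [//|n'] _.
have ha1 : (1 <= a)%N by apply: ltnW.
pose al := powR (a%:R : R) (n'.+1%:R^-1).
have a0 : 0 < (a%:R : R) by rewrite ltr0n; apply: leq_trans ha.
have al0 : 0 < al by apply: powR_gt0.
have hal : al ^+ n'.+1 = a%:R.
  rewrite /al -powR_mulrn; last exact: ltW.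
  by rewrite -powRrM mulVf ?powRr1 ?pnatr_eq0 // ltW.
have an0 : 0 < al ^+ n' by apply: exprn_gt0.
pose th : R := theta R al n'.
have /andP[th0 th1] := @theta_facts R al n' al0.
pose L : R := 1 / n'.+1%:R / al ^+ n'.
have L0 : L != 0 by rewrite /L; apply: lt0r_neq0; apply: divr_gt0 => //; apply: divr_gt0; rewrite ?ltr0n.
pose NR (k : nat) : R := (k%:R : R) ^+ (k * n'.+1).
pose X (k e : nat) := (\sum_(r < n'.+1) (cc a n' e r)%:R * NR k ^+ r) / (NR k ^+ n' * (1 + al) ^+ e).
have step1 : \forall k \near \oo,
    seq6p2 R a n'.+1 k = (1 + al) * X k (k * n'.+1 + 1)%N / X k (k * n'.+1)%N - 1.
  near=> k.
  have hk : (2 * a + 2 <= k)%N by near: k; exists (2 * a + 2)%N.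
  rewrite /seq6p2 !term_eq // ?leq_addr // !castS.
  rewrite /X -/(NR k).
  set T1 := \sum_(r < n'.+1) _.
  set T0 := \sum_(r < n'.+1) _.
  have NR0 : NR k != 0.
    rewrite /NR expf_neq0 // pnatr_eq0 -lt0n; apply: leq_trans hk; lia.
  have Q0 : (1 + al) != 0 by apply: lt0r_neq0; lra.
  rewrite invf_div.
  set u := T0^-1.
  rewrite addn1 exprS; field.
  by rewrite Q0 expf_neq0 // expf_neq0.
have bounds : forall e k, (2 * a + 2 <= k)%N -> (e <= k * n'.+1 + 1)%N ->
   (1 / n'.+1%:R - th ^+ k <= w R a n' al e n' <= 1 / n'.+1%:R + th ^+ k) ->
   L - th ^+ k / al ^+ n' <= X k e <= L + th ^+ k / al ^+ n' + n'.+1%:R * (a + 1)%:R * (2^-1) ^+ k.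
  move=> e k hk he /andP[hw1 hw2].
  have k0 : (0 < k)%N by apply: leq_trans hk; lia.
  have N1 : 1 <= NR k by rewrite /NR; apply: exprn_ege1; rewrite ler1n.
  have hB : forall r, (cc a n' e r <= (a + 1) ^ (k * n'.+1 + 1))%N.
    move=> r; apply: leq_trans (@cc_le a n' e r ha1) _.
    by apply: leq_pexp2l; first by rewrite addn1.
  have /andP[x1 x2] := @Xbound R a n' al (NR k) e _ al0 hal N1 hB.
  have hb := @bnd R a n' k ha1 hk.
  have y1 : (1 / n'.+1%:R - th ^+ k) / al ^+ n' <= w R a n' al e n' / al ^+ n'.
    by rewrite ler_pM2r ?invr_gt0.
  have y2 : w R a n' al e n' / al ^+ n' <= (1 / n'.+1%:R + th ^+ k) / al ^+ n'.
    by rewrite ler_pM2r ?invr_gt0.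
  rewrite mulrBl in y1; rewrite mulrDl in y2.
  rewrite /X /L; apply/andP; split; first exact: le_trans y1 x1.
  apply: (le_trans x2); apply: lerD; [exact: y2 | exact: hb].
have lim2 : forall f : nat -> nat, (forall k, (f k <= k * n'.+1 + 1)%N) ->
    (forall k, (1 / n'.+1%:R - th ^+ k <= w R a n' al (f k) n' <= 1 / n'.+1%:R + th ^+ k)) ->
    X k (f k) @[k --> \oo] --> L.
  move=> f hf hw.
  apply: (@squeeze_cvgr _ _ _ _ (fun k => L - th ^+ k / al ^+ n')
     (fun k => L + th ^+ k / al ^+ n' + n'.+1%:R * (a + 1)%:R * (2^-1) ^+ k) _ _ L).
  - near=> k.
    have hk : (2 * a + 2 <= k)%N by near: k; exists (2 * a + 2)%N.
    exact: bounds.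
  - have thn : `|th| < 1 by rewrite ger0_norm.
    have := cvgB (cvg_cst L) (cvgMr_tmp (b := (al ^+ n')^-1) (cvg_expr thn)).
    by rewrite mul0r subr0; apply.
  - have thn : `|th| < 1 by rewrite ger0_norm.
    have h2n : `|2^-1 : R| < 1 by rewrite ger0_norm ?invr_ge0 // invf_lt1 // ltr1n.
    have := cvgD (cvgD (cvg_cst L) (cvgMr_tmp (b := (al ^+ n')^-1) (cvg_expr thn)))
       (cvgMl_tmp (a := n'.+1%:R * (a + 1)%:R) (cvg_expr h2n)).
    by rewrite mul0r mulr0 !addr0; apply.
have c0 : X k (k * n'.+1)%N @[k --> \oo] --> L.
  apply: (lim2 (fun k => k * n'.+1)%N) => k; first exact: leq_addr.
  exact: (@w_close R a n' al al0 hal k).1.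
have c1 : X k (k * n'.+1 + 1)%N @[k --> \oo] --> L.
  apply: (lim2 (fun k => k * n'.+1 + 1)%N) => k; first exact: leqnn.
  rewrite addn1; exact: (@w_close R a n' al al0 hal k).2.
have H := cvgB (cvgM (cvgMl_tmp (a := 1 + al) c1) (cvgV L0 c0)) (cvg_cst (1 : R)).
have E : (1 + al) * L * L^-1 - 1 = al by rewrite mulfK // addrC addKr.
rewrite E in H.
have step1' : \forall k \near \oo,
    (1 + al) * X k (k * n'.+1 + 1)%N / X k (k * n'.+1)%N - 1 = seq6p2 R a n'.+1 k.
  by apply: filterS step1 => k ->.
have H' : ((1 + al) * X k (k * n'.+1 + 1)%N / X k (k * n'.+1)%N - 1) @[k --> \oo] --> al.
  by apply: H.
idtac.
exact: (cvg_trans (near_eq_cvg step1') H').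
Unshelve. all: end_near.
Qed.

End Aux.

Theorem theorem6p2 (R : realType) (a n : nat) (ha : (1 < a)%N) (hn : (0 < n)%N) :
  seq6p2 R a n @ \oo --> powR (a%:R : R) (n%:R^-1).
Proof.
exact: (main_aux R a n ha hn).
Qed.
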